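(* Let $A=(a_{i,j})_{i,j\in\mathbf N}\in\mathcal A$. Suppose there exist positive constants $C$ and $c$ such that (i) $a_{i,j}=0$ whenever $i>Cj^c$, and (ii) $|a_{i,j}|\le Cj^c$ for all $i,j$. Then $A\in\mathcal{DR}$. Furthermore, the set of all elements of $\mathcal A$ satisfying these conditions (with constants depending on the matrix) is a subring of $\mathcal{DR}$.
   Context: $\mathbf N=\{1,2,\dots\}$. $\mathcal A$ is the ring of matrices $(a_{i,j})_{i,j\in\mathbf N}$ with complex entries and finitely many nonzero entries in each column. $\mathcal A$ acts on the right on the space $\mathbf C^{\mathbf N}$ of complex sequences by $(fA)(n)=\sum_m a_{m,n}f(m)$. $\mathcal{DS}\subseteq\mathbf C^{\mathbf N}$ is the subspace of sequences $f$ for which there exist positive constants $C,c$ with $|f(n)|\le Cn^c$ for all $n$. $\mathcal{DR}$ is the subalgebra of $\mathcal A$ consisting of all $A$ with $\mathcal{DS}\,A\subseteq\mathcal{DS}$. *)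

(* Defs.v *)
From Stdlib Require Import Reals List ClassicalEpsilon.
From Coquelicot Require Import Coquelicot.
Open Scope R_scope.

(* Index convention: N = {1,2,...} is represented by nat via the shift
   k : nat  <->  k+1 : N.  A matrix (a_{i,j})_{i,j in N} is a function
   A : nat -> nat -> C with  A i j = a_{i+1,j+1},  and a sequence
   f : N -> C is  f : nat -> C  with  f n = f(n+1). *)

Definition Mat := nat -> nat -> C.
Definition Seq := nat -> C.

Definition idx (k : nat) : R := INR (S k).

Definition csum (g : nat -> C) (M : nat) : C :=
  fold_right Cplus (RtoC 0) (map g (seq 0 M)).

Definition in_A (A : Mat) : Prop :=
  forall j : nat, exists M : nat, forall i : nat, (M <= i)%nat -> A i j = RtoC 0.

(* a chosen bound for column j (meaningful when A is in \mathcal A) *)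
Definition colbd (A : Mat) (j : nat) : nat :=
  epsilon (inhabits 0%nat)
    (fun M : nat => forall i : nat, (M <= i)%nat -> A i j = RtoC 0).

Definition act (f : Seq) (A : Mat) : Seq :=
  fun n => csum (fun m => Cmult (A m n) (f m)) (colbd A n).

Definition mat0 : Mat := fun _ _ => RtoC 0.
Definition mat1 : Mat := fun i j => if Nat.eqb i j then RtoC 1 else RtoC 0.
Definition matadd (A B : Mat) : Mat := fun i j => Cplus (A i j) (B i j).
Definition matopp (A : Mat) : Mat := fun i j => Copp (A i j).
Definition matmul (A B : Mat) : Mat :=
  fun i j => csum (fun k => Cmult (A i k) (B k j)) (colbd B j).

Definition DS (f : Seq) : Prop :=
  exists C0 c : R, 0 < C0 /\ 0 < c /\
    forall n : nat, Cmod (f n) <= C0 * Rpower (idx n) c.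

Definition DR (A : Mat) : Prop :=
  in_A A /\ forall f : Seq, DS f -> DS (act f A).

Definition poly_bounded (A : Mat) : Prop :=
  exists C0 c : R, 0 < C0 /\ 0 < c /\
    (forall i j : nat, idx i > C0 * Rpower (idx j) c -> A i j = RtoC 0) /\
    (forall i j : nat, Cmod (A i j) <= C0 * Rpower (idx j) c).

Definition S_good (A : Mat) : Prop := in_A A /\ poly_bounded A.

(* Main.v *)
Require Import Defs.
From Stdlib Require Import Reals List ClassicalEpsilon Lra ZArith Lia.
From Coquelicot Require Import Coquelicot.
Open Scope R_scope.

Lemma idx_ge1 n : 1 <= idx n.
Proof. unfold idx. rewrite S_INR. pose proof (pos_INR n). lra. Qed.
Lemma idx_pos n : 0 < idx n.
Proof. pose proof (idx_ge1 n). lra. Qed.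
Lemma Rpower_pos x y : 0 < Rpower x y.
Proof. unfold Rpower. apply exp_pos. Qed.

Lemma fold_Cplus a l : fold_right Cplus a l = Cplus (fold_right Cplus (RtoC 0) l) a.
Proof. induction l as [|x l IH]; simpl. now rewrite Cplus_0_l.
  rewrite IH. now rewrite Cplus_assoc. Qed.

Lemma csum_S g M : csum g (S M) = Cplus (csum g M) (g M).
Proof. unfold csum. rewrite seq_S, map_app, fold_right_app. simpl.
  rewrite fold_Cplus, Cplus_0_r. reflexivity. Qed.

Lemma csum_zero g M : (forall m, g m = RtoC 0) -> csum g M = RtoC 0.
Proof. intros H. induction M. reflexivity. rewrite csum_S, IHM, H. apply Cplus_0_r. Qed.

Lemma csum_bound g M X Y : 0 <= X -> 0 <= Y ->
  (forall m, g m <> RtoC 0 -> idx m <= X) ->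
  (forall m, idx m <= X -> Cmod (g m) <= Y) ->
  Cmod (csum g M) <= X * Y.
Proof.
  intros HX HY H1 H2.
  assert (Cmod (csum g M) <= Y * Rmin (INR M) X).
  { induction M.
    - unfold csum; simpl. rewrite Cmod_0. unfold Rmin. destruct Rle_dec; nra.
    - rewrite csum_S. eapply Rle_trans. apply Cmod_triangle.
      destruct (classic (g M = RtoC 0)) as [E|E].
      + rewrite E, Cmod_0. rewrite S_INR. unfold Rmin in *.
        destruct (Rle_dec (INR M) X), (Rle_dec (INR M + 1) X); nra.
      + pose proof (H1 _ E) as HM. pose proof (H2 _ HM). unfold idx in HM.
        rewrite S_INR in HM |- *. unfold Rmin in *.
        destruct (Rle_dec (INR M) X), (Rle_dec (INR M + 1) X); nra. }
  eapply Rle_trans. apply H. pose proof (Rmin_r (INR M) X). nra.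
Qed.

Lemma pb_inA A : poly_bounded A -> in_A A.
Proof.
  intros (C0 & c & HC & Hc & Hz & _) j.
  set (X := C0 * Rpower (idx j) c).
  destruct (archimed X) as [H1 _].
  assert (HX : 0 < X) by (unfold X; pose proof (Rpower_pos (idx j) c); nra).
  exists (Z.to_nat (up X)). intros i Hi. apply Hz. fold X.
  assert (0 < up X)%Z. { apply lt_IZR. lra. }
  apply le_INR in Hi. rewrite INR_IZR_INZ, Z2Nat.id in Hi by lia.
  unfold idx. rewrite S_INR. lra.
Qed.

Lemma Rpow_scale K x a b : 0 < K -> 0 < x ->
  Rpower (K * Rpower x a) b = Rpower K b * Rpower x (a*b).
Proof. intros. rewrite <- Rpower_mult_distr, Rpower_mult; auto. apply Rpower_pos. Qed.

Lemma part1 A : in_A A -> poly_bounded A -> DR A.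
Proof.
  intros HA HP. split; [exact HA|]. destruct HP as (Ca & ca & HCa & Hca & Hz & Hb).
  intros f (C0 & c0 & HC0 & Hc0 & Hf).
  exists (Ca*Ca*C0*Rpower Ca c0), (ca+ca+ca*c0). repeat split.
  - pose proof (Rpower_pos Ca c0). repeat apply Rmult_lt_0_compat; auto.
  - nra.
  - intro n. unfold act.
    set (P := Rpower (idx n) ca). set (X := Ca * P).
    assert (HP : 0 < P) by apply Rpower_pos.
    assert (HX : 0 < X) by (unfold X; nra).
    assert (HXc : 0 < Rpower X c0) by apply Rpower_pos.
    assert (0 <= X*(C0*Rpower X c0)) by (apply Rmult_le_pos; nra).
    eapply Rle_trans. apply (csum_bound _ _ X (X*(C0*Rpower X c0))); try nra.
    + intros m Hm. destruct (Rle_dec (idx m) X) as [h|h]; auto.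
      exfalso. apply Hm. rewrite (Hz m n). apply Cmult_0_l. unfold X, P in h. lra.
    + intros m Hm. rewrite Cmod_mult. apply Rmult_le_compat; try apply Cmod_ge_0.
      apply Hb. eapply Rle_trans. apply Hf. apply Rmult_le_compat_l. lra.
      apply Rle_Rpower_l. lra. split; auto. apply idx_pos.
    + right. unfold X at 3, P. rewrite Rpow_scale by (auto; apply idx_pos).
      rewrite !Rpower_plus. unfold X, P. ring.
Qed.

Lemma good0 : S_good mat0.
Proof.
  assert (H : poly_bounded mat0).
  { exists 1, 1. repeat split; try lra. intros i j. unfold mat0. rewrite Cmod_0.
    pose proof (Rpower_pos (idx j) 1). lra. }
  split; auto. now apply pb_inA.
Qed.

Lemma good1 : S_good mat1.
Proof.
  assert (H : poly_bounded mat1).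
  { exists 1, 1. repeat split; try lra.
    - intros i j Hij. unfold mat1. destruct (Nat.eqb_spec i j); auto.
      subst. rewrite Rpower_1 in Hij by apply idx_pos. lra.
    - intros i j. rewrite Rpower_1 by apply idx_pos. pose proof (idx_ge1 j).
      unfold mat1. destruct Nat.eqb; [rewrite Cmod_1|rewrite Cmod_0]; lra. }
  split; auto. now apply pb_inA.
Qed.

Lemma goodopp A : S_good A -> S_good (matopp A).
Proof.
  intros [_ (C0 & c & H1 & H2 & Hz & Hb)].
  assert (H : poly_bounded (matopp A)).
  { exists C0, c. repeat split; auto.
    - intros i j h. unfold matopp. rewrite (Hz i j h).
      apply injective_projections; simpl; lra.
    - intros i j. unfold matopp. rewrite Cmod_opp. auto. }
  split; auto. now apply pb_inA.
Qed.

Lemma weaken K1 e1 K e n : 0 <= K1 <= K -> e1 <= e ->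
  K1 * Rpower (idx n) e1 <= K * Rpower (idx n) e.
Proof.
  intros. apply Rmult_le_compat; try lra. left; apply Rpower_pos.
  apply Rle_Rpower; auto. apply idx_ge1.
Qed.

Lemma goodadd A B : S_good A -> S_good B -> S_good (matadd A B).
Proof.
  intros [_ (C1 & c1 & H1 & H2 & Hz1 & Hb1)] [_ (C2 & c2 & H3 & H4 & Hz2 & Hb2)].
  assert (H : poly_bounded (matadd A B)).
  { exists (C1+C2), (c1+c2). repeat split; try lra.
    - intros i j h. unfold matadd.
      pose proof (weaken C1 c1 (C1+C2) (c1+c2) j).
      pose proof (weaken C2 c2 (C1+C2) (c1+c2) j).
      rewrite Hz1, Hz2. apply Cplus_0_l. lra. lra.
    - intros i j. unfold matadd. eapply Rle_trans. apply Cmod_triangle.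
      pose proof (weaken C1 c1 C1 (c1+c2) j). pose proof (weaken C2 c2 C2 (c1+c2) j).
      pose proof (Hb1 i j). pose proof (Hb2 i j).
      assert (C1 * Rpower (idx j) c1 <= C1 * Rpower (idx j) (c1+c2)) by (apply H; lra).
      assert (C2 * Rpower (idx j) c2 <= C2 * Rpower (idx j) (c1+c2)) by (apply H0; lra).
      lra. }
  split; auto. now apply pb_inA.
Qed.

Lemma goodmul A B : S_good A -> S_good B -> S_good (matmul A B).
Proof.
  intros [_ (CA & cA & H1 & H2 & HzA & HbA)] [_ (CB & cB & H3 & H4 & HzB & HbB)].
  assert (HCB : 0 < Rpower CB cA) by apply Rpower_pos.
  assert (H : poly_bounded (matmul A B)).
  { exists (CA*Rpower CB cA*(1+CB*CB)), (cB*cA+cB+cB). repeat split.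
    - apply Rmult_lt_0_compat; nra.
    - nra.
    - intros i j h. unfold matmul. apply csum_zero. intros k.
      destruct (Rle_dec (idx k) (CB * Rpower (idx j) cB)) as [hk|hk].
      + rewrite HzA. apply Cmult_0_l.
        eapply Rle_lt_trans; [|apply h].
        apply Rle_trans with (CA * Rpower (CB * Rpower (idx j) cB) cA).
        * apply Rmult_le_compat_l. lra. apply Rle_Rpower_l. lra. split; auto. apply idx_pos.
        * rewrite Rpow_scale by (auto; apply idx_pos). rewrite <- Rmult_assoc.
          apply weaken. split. nra. assert (0 <= CA*Rpower CB cA*(CB*CB)). 
          { apply Rmult_le_pos; nra. } nra. nra.
      + rewrite HzB. apply Cmult_0_r. lra.
    - intros i j. unfold matmul.
      set (L := CB * Rpower (idx j) cB).
      assert (HL : 0 < L) by (unfold L; pose proof (Rpower_pos (idx j) cB); nra).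
      assert (HLc : 0 < Rpower L cA) by apply Rpower_pos.
      assert (0 <= CA * Rpower L cA * L) by (apply Rmult_le_pos; nra).
      eapply Rle_trans. apply (csum_bound _ _ L (CA * Rpower L cA * L)); try nra.
      + intros k Hk. destruct (Rle_dec (idx k) L) as [h|h]; auto.
        exfalso. apply Hk. rewrite (HzB k j). apply Cmult_0_r. unfold L in h. lra.
      + intros k Hk. rewrite Cmod_mult. apply Rmult_le_compat; try apply Cmod_ge_0.
        eapply Rle_trans. apply HbA. apply Rmult_le_compat_l. lra.
        apply Rle_Rpower_l. lra. split; auto. apply idx_pos. apply HbB.
      + apply Rle_trans with (CA*Rpower CB cA*(CB*CB) * Rpower (idx j) (cB*cA+cB+cB)).
        * right. unfold L. rewrite Rpow_scale by (auto; apply idx_pos).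
          rewrite !Rpower_plus. ring.
        * apply weaken. split. apply Rmult_le_pos; nra. nra. lra. }
  split; auto. now apply pb_inA.
Qed.

Theorem lemma2p1 :
  (forall A : Mat, in_A A -> poly_bounded A -> DR A) /\
  ((forall A : Mat, S_good A -> DR A) /\
   S_good mat0 /\ S_good mat1 /\
   (forall A B : Mat, S_good A -> S_good B -> S_good (matadd A B)) /\
   (forall A : Mat, S_good A -> S_good (matopp A)) /\
   (forall A B : Mat, S_good A -> S_good B -> S_good (matmul A B))).
Proof.
  split; [exact part1|]. split; [intros A [H1 H2]; now apply part1|].
  split; [exact good0|]. split; [exact good1|]. split; [exact goodadd|].
  split; [exact goodopp|exact goodmul].
Qed.
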